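(* For integers $n\ge 0$ and $i\ge 0$, \[ S_n(i+2)=S_n(i)-q^{i}S_{n+1}(i)+q^{i(n+1)}(1+q^i)(q;q^2)_{n+1}, \] where $S_m(i):=\sum_{j=0}^{m} \frac{q^{ij}(q;q)_{m+j}}{(q^2;q^2)_j}$.
   Context: $(a;q)_0:=1$ and $(a;q)_n:=(1-a)(1-aq)\cdots(1-aq^{n-1})$ for $n\ge1$. *)

(* Defs.v *)
From HB Require Import structures.
From mathcomp Require Import all_boot all_order all_algebra.
Set Implicit Arguments. Unset Strict Implicit. Unset Printing Implicit Defensive.
Import Order.TTheory GRing.Theory Num.Theory.
Local Open Scope ring_scope.

Definition qpoch (R : comRingType) (a q : R) (n : nat) : R :=
  \prod_(k < n) (1 - a * q ^+ k).

Definition S (F : fieldType) (q : F) (m i : nat) : F :=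
  \sum_(j < m.+1) q ^+ (i * j) * qpoch q q (m + j) / qpoch (q ^+ 2) (q ^+ 2) j.

(* Main.v *)
Require Import Defs.
From HB Require Import structures.
From mathcomp Require Import all_boot all_order all_algebra.
From mathcomp Require Import ring zify.
Import GRing.Theory.
Local Open Scope ring_scope.

Lemma qpochS (R : comRingType) (a q : R) n :
  qpoch a q n.+1 = qpoch a q n * (1 - a * q ^+ n).
Proof. by rewrite /qpoch big_ord_recr. Qed.

Lemma qpoch_odd (F : fieldType) (q : F) n :
  qpoch q q (n + n.+1) = qpoch q (q ^+ 2) n.+1 * qpoch (q ^+ 2) (q ^+ 2) n.
Proof.
elim: n => [|n IH]; first by rewrite /qpoch !big_ord_recr !big_ord0 /= ?expr0; ring.
have -> : (n.+1 + n.+2 = (n + n.+1).+2)%N by rewrite !addnS addSn.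
rewrite !qpochS IH qpochS.
have -> : q * q ^+ (n + n.+1).+1 = q * (q ^+ 2) ^+ n.+1.
  by rewrite -exprM; congr (_ * _ ^+ _); lia.
have -> : q * q ^+ (n + n.+1) = q ^+ 2 * (q ^+ 2) ^+ n.
  by rewrite -exprS -exprM -exprD; congr (_ ^+ _); lia.
ring.
Qed.

Theorem lemma3p2 (F : fieldType) (q : F) (n i : nat)
  (hq : forall j : nat, (j <= n.+1)%N -> qpoch (q ^+ 2) (q ^+ 2) j != 0) :
  S q n (i + 2) =
  S q n i - q ^+ i * S q n.+1 i
  + q ^+ (i * n.+1) * (1 + q ^+ i) * qpoch q (q ^+ 2) n.+1.
Proof.
pose P := qpoch q q. pose D := qpoch (q ^+ 2) (q ^+ 2).
pose f k := q ^+ (i * k.+1) * P (n + k.+1)%N / D k.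
have hD : forall k, (k <= n)%N -> (1 - q ^+ 2 * (q ^+ 2) ^+ k) != 0 /\ D k != 0.
  move=> k hk; have := hq k.+1 hk; rewrite qpochS mulf_eq0 negb_or => /andP[a b].
  by split.
have A : S q n i - S q n (i + 2) = \sum_(k < n) f k.
  rewrite /S -sumrB big_ord_recl /= !muln0 expr0 subrr add0r.
  apply: eq_bigr => k _; rewrite /bump /= add1n.
  have [h1 h2] := hD k (ltnW (ltn_ord k)).
  rewrite /f -/P -/D [D k.+1]qpochS -/D mulnDl exprD (exprM q 2 k.+1) [(q ^+ 2) ^+ k.+1]exprS.
  field; by rewrite h1 h2.
have B : q ^+ i * S q n.+1 i = \sum_(k < n) f k + f n + f n.+1.
  rewrite /S mulr_sumr !big_ord_recr /=; congr (_ + _ + _).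
    apply: eq_bigr => k _; rewrite /f -/P -/D mulnS exprD addSnnS; by rewrite !mulrA.
    by rewrite /f -/P -/D mulnS exprD addSnnS !mulrA.
  by rewrite /f -/P -/D (mulnS i n.+1) exprD addSnnS !mulrA.
have Cn : f n = q ^+ (i * n.+1) * qpoch q (q ^+ 2) n.+1.
  have [h1 h2] := hD n (leqnn n).
  rewrite /f /P qpoch_odd -/D; field; by rewrite h2.
have Cn1 : f n.+1 = q ^+ (i * n.+1) * q ^+ i * qpoch q (q ^+ 2) n.+1.
  have [h1 h2] := hD n (leqnn n).
  rewrite /f /P addnS qpochS qpoch_odd [D n.+1]qpochS -/D mulnS addnC exprD.
  have -> : q * q ^+ (n + n.+1) = q ^+ 2 * (q ^+ 2) ^+ n.
    by rewrite -exprS -exprM -exprD; congr (_ ^+ _); lia.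
  field; by rewrite h1 h2.
have -> : S q n (i + 2) = S q n i - \sum_(k < n) f k by rewrite -A; ring.
rewrite B Cn Cn1; ring.
Qed.
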